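(* Let $w:\{0,1\}^L\to\mathbb{R}_{\ge 0}$ be a generic fitness landscape displaying universal positive epistasis. Then $w$ induces the standard staircase triangulation of $[0,1]^L$.
   Context: Genotypes $g\in\{0,1\}^L$ are identified with subsets $\{i:g_i=1\}$ of $\mathcal{L}=\{1,\dots,L\}$ and with vertices of $[0,1]^L$. The landscape displays universal positive epistasis if for all $b'\subset b\subseteq\mathcal{L}$ and all $s\subseteq\mathcal{L}\setminus b$ one has $w_{b\cup s}-w_b\ge w_{b'\cup s}-w_{b'}$; equivalently $w_{g\cup g'}+w_{g\cap g'}\ge w_g+w_{g'}$ for all genotypes $g,g'$. The triangulation induced by $w$ is the regular subdivision of $[0,1]^L$ obtained by projecting the upper faces of $\mathrm{conv}\{(g,w_g)\}\subset\mathbb{R}^{L+1}$; $w$ is generic if all $w_g$ are distinct and this subdivision is a triangulation. The standard staircase triangulation consists of the $L!$ simplices $\{g_0\subset g_1\subset\cdots\subset g_L\}$ with $g_0=\emptyset$, $g_L=\mathcal{L}$, $|g_k|=k$. *)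

(* Defs.v *)
(* Genotypes g in {0,1}^L are finite sets {set 'I_L};
   the coordinate x_i of the vertex g of [0,1]^L is 1 if i \in g, else 0. *)
From HB Require Import structures.
From mathcomp Require Import all_boot all_order all_algebra.
Set Implicit Arguments. Unset Strict Implicit. Unset Printing Implicit Defensive.
Import Order.TTheory GRing.Theory Num.Theory.
Local Open Scope ring_scope.

Section Defs.
Variables (R : realFieldType) (L : nat).
Notation geno := {set 'I_L}.

(* value at the vertex g of the affine function x |-> c + sum_i a_i x_i *)
Definition affval (a : 'I_L -> R) (c : R) (g : geno) : R := c + \sum_(i in g) a i.

Definition universal_positive_epistasis (w : geno -> R) : Prop :=
  forall b' b s : geno, b' \proper b -> [disjoint s & b] ->
    w (b' :|: s) - w b' <= w (b :|: s) - w b.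

(* S is (the vertex set of) a cell of the regular subdivision induced by w:
   the projection of an upper face of conv{(g, w g)}, i.e. there is a
   non-vertical supporting hyperplane (graph of an affine function h)
   lying weakly above all lifted points and touching exactly the points of S. *)
Definition is_cell (w : geno -> R) (S : {set geno}) : Prop :=
  exists (a : 'I_L -> R) (c : R),
    (forall g, w g <= affval a c g) /\
    (forall g, (g \in S) <-> (affval a c g = w g)).

Definition affinely_independent (S : {set geno}) : Prop :=
  forall lam : geno -> R,
    (forall g, g \notin S -> lam g = 0) ->
    \sum_(g in S) lam g = 0 ->
    (forall i : 'I_L, \sum_(g in S | i \in g) lam g = 0) ->
    forall g, lam g = 0.

Definition affinely_spanning (S : {set geno}) : Prop :=
  forall (a : 'I_L -> R) (c : R),
    (forall g, g \in S -> affval a c g = 0) ->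
    c = 0 /\ forall i, a i = 0.

(* generic: distinct values and the induced subdivision is a triangulation
   (every cell is a simplex) *)
Definition generic (w : geno -> R) : Prop :=
  injective w /\ forall S, is_cell w S -> affinely_independent S.

Definition maximal_cell (w : geno -> R) (S : {set geno}) : Prop :=
  is_cell w S /\ affinely_spanning S.

Definition staircase_simplex (S : {set geno}) : Prop :=
  exists f : nat -> geno,
    (forall k, (k <= L)%N -> #|f k| = k) /\
    (forall k, (k < L)%N -> f k \subset f k.+1) /\
    S = [set f (val k) | k : 'I_L.+1].

Definition induces_staircase (w : geno -> R) : Prop :=
  forall S, maximal_cell w S <-> staircase_simplex S.

End Defs.

(* Main.v *)
Require Import Defs.
From HB Require Import structures.
From mathcomp Require Import all_boot all_order all_algebra.
From mathcomp Require Import lra zify.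
Import Order.TTheory GRing.Theory Num.Theory.
Local Open Scope ring_scope.
Set Implicit Arguments. Unset Strict Implicit. Unset Printing Implicit Defensive.
Section Aux.
Variable R : realFieldType.
Variable L : nat.
Notation geno := {set 'I_L}.

Lemma sum_ind (T : finType) (A : {set T}) (P : pred T) (y : T) :
  \sum_(x in A | P x) ((x == y)%:R : R) = ((y \in A) && P y)%:R.
Proof.
case: (boolP ((y \in A) && P y)) => Hy.
- rewrite (bigD1 y) //= eqxx big1 ?addr0 // => x /andP [_ /negbTE ->]. done.
- rewrite big1 // => x Hx; case: eqP => // Exy; subst; by rewrite Hx in Hy.
Qed.

Lemma sum_ind1 (T : finType) (A : {set T}) (y : T) :
  \sum_(x in A) ((x == y)%:R : R) = (y \in A)%:R.
Proof.
have := sum_ind A predT y. rewrite andbT => <-. by apply: eq_bigl => x; rewrite andbT.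
Qed.

Lemma sum_mem_card (h A : geno) :
  \sum_(j in h) ((j \in A)%:R : R) = #|h :&: A|%:R.
Proof.
rewrite -sum1_card natr_sum big_mkcond [RHS]big_mkcond.
apply: eq_bigr => j _; rewrite in_setI. by case: (j \in h); case: (j \in A).
Qed.

Lemma affval_mod (a : 'I_L -> R) c (x y : geno) :
  affval a c (x :|: y) + affval a c (x :&: y) = affval a c x + affval a c y.
Proof.
rewrite /affval (big_setID x) /= setUK.
rewrite [in RHS](big_setID (A := y) x) /=.
have -> : (x :|: y) :\: x = y :\: x.
  by apply/setP => i; rewrite !inE; case: (i \in x); case: (i \in y).
rewrite setIC. lra.
Qed.

Lemma supermod (w : geno -> R) : universal_positive_epistasis w ->
  forall x y, w x + w y <= w (x :|: y) + w (x :&: y).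
Proof.
move=> H x y.
have [sxy|nsxy] := boolP (x \subset y).
  by rewrite (setUidPr sxy) (setIidPl sxy) addrC.
have P: (x :&: y) \proper x.
  rewrite properEneq subsetIl andbT. apply: contra nsxy => /eqP <-. exact: subsetIr.
have D: [disjoint (y :\: x) & x].
  rewrite -setI_eq0; apply/eqP/setP => i; rewrite !inE. by case: (i \in x); rewrite ?andbF.
have := H _ _ _ P D.
have -> : x :&: y :|: y :\: x = y.
  by apply/setP => i; rewrite !inE; case: (i \in x); case: (i \in y).
have -> : x :|: y :\: x = x :|: y.
  by apply/setP => i; rewrite !inE; case: (i \in x); case: (i \in y).
lra.
Qed.

End Aux.

Section Dir2.
Variable R : realFieldType.
Variable L : nat.
Notation geno := {set 'I_L}.
Variable w : geno -> R.
Hypothesis Hgen : generic w.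
Hypothesis Hupe : universal_positive_epistasis w.

Lemma cell_lattice S : is_cell w S -> forall g g', g \in S -> g' \in S ->
  (g :|: g' \in S) /\ (g :&: g' \in S).
Proof.
move=> [a [c [Hle Hiff]]] g g' /Hiff Hg /Hiff Hg'.
have M := affval_mod a c g g'.
have Sm := supermod Hupe g g'.
have H1 := Hle (g :|: g'). have H2 := Hle (g :&: g').
split; apply/Hiff; lra.
Qed.

Lemma cell_chain S : is_cell w S -> forall g g', g \in S -> g' \in S ->
  (g \subset g') || (g' \subset g).
Proof.
move=> HS g g' Hg Hg'.
have [HU HI] := cell_lattice HS Hg Hg'.
apply/negPn/negP; rewrite negb_or => /andP [n1 n2].
have AI := Hgen.2 S HS.
pose lam := fun h : geno => ((h == g)%:R + (h == g')%:R - (h == g :|: g')%:R - (h == g :&: g')%:R : R).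
have := AI lam.
have Hgg' : (g == g') = false.
  apply/negbTE; apply: contra n1 => /eqP ->; exact: subxx.
have HgU : (g == g :|: g') = false.
  apply/negbTE; apply: contra n2 => /eqP E; rewrite E; exact: subsetUr.
have HgI : (g == g :&: g') = false.
  apply/negbTE; apply: contra n1 => /eqP E; rewrite {1}E; exact: subsetIr.
move=> /(_ _ _ _ g) /eqP; rewrite /lam eqxx Hgg' HgU HgI /= subr0 subr0 addr0 oner_eq0.
move=> HH; suff: false by []; apply: HH.
- move=> h hS.
  have F : forall x, x \in S -> (h == x) = false.
    by move=> x xS; apply/negbTE; apply: contra hS => /eqP ->.
  by rewrite !F // !subr0 addr0.
- rewrite !sumrB big_split /= !sum_ind1 Hg Hg' HU HI /=. lra.
- move=> i; rewrite !sumrB big_split /= !sum_ind Hg Hg' HU HI /= !inE.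
  by case: (i \in g); case: (i \in g') => /=; lra.
Qed.


Lemma span_nonempty (S : {set geno}) : affinely_spanning R S -> exists g, g \in S.
Proof.
move=> Hs; case: (set_0Vmem S) => [E|[g Hg]]; last by exists g.
case: (Hs (fun _ => 0) 1) => [g|H _]; first by rewrite E inE.
by move: (@oner_neq0 R); rewrite H eqxx.
Qed.

Lemma span_in (S : {set geno}) i : affinely_spanning R S -> exists2 g, g \in S & i \in g.
Proof.
move=> Hs; case: (boolP [exists g in S, i \in g]) => [/exists_inP [g Hg Hi]|H].
  by exists g.
case: (Hs (fun j => (j == i)%:R) 0) => [g Hg|_ H2].
  rewrite /affval add0r sum_ind1.
  case: (boolP (i \in g)) => // Hi; case/exists_inP: H; by exists g.
by move: (H2 i); rewrite eqxx => /eqP; rewrite oner_eq0.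
Qed.

Lemma span_out (S : {set geno}) i : affinely_spanning R S -> exists2 g, g \in S & i \notin g.
Proof.
move=> Hs; case: (boolP [exists g in S, i \notin g]) => [/exists_inP [g Hg Hi]|H].
  by exists g.
case: (Hs (fun j => - (j == i)%:R) 1) => [g Hg|H2 _].
  rewrite /affval sumrN sum_ind1.
  case: (boolP (i \in g)) => Hi; first by rewrite subrr.
  case/exists_inP: H; by exists g.
by move: (@oner_neq0 R); rewrite H2 eqxx.
Qed.

Lemma span_sep (S : {set geno}) i j : affinely_spanning R S -> i != j ->
  exists2 g, g \in S & (i \in g) != (j \in g).
Proof.
move=> Hs nij.
case: (boolP [exists g in S, (i \in g) != (j \in g)]) => [/exists_inP [g Hg Hi]|H].
  by exists g.
case: (Hs (fun k => (k == i)%:R - (k == j)%:R) 0) => [g Hg|_ H2].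
  rewrite /affval add0r sumrB !sum_ind1.
  case: (boolP ((i \in g) != (j \in g))) => Hi.
    case/exists_inP: H; by exists g.
  by move: Hi; rewrite negbK => /eqP ->; rewrite subrr.
by move: (H2 i); rewrite eqxx (negbTE nij) subr0 => /eqP; rewrite oner_eq0.
Qed.

Lemma dir2 S : maximal_cell w S -> staircase_simplex S.
Proof.
move=> [HS Hs].
have Hch := cell_chain HS.
have Hcs : forall g g', g \in S -> g' \in S -> (#|g| <= #|g'|)%N -> g \subset g'.
  move=> g g' Hg Hg' Hc; case/orP: (Hch _ _ Hg Hg') => // Hs'.
  have /eqP -> : g' == g by rewrite eqEcard Hs' Hc.
  exact: subxx.
have Hci : forall g g', g \in S -> g' \in S -> #|g| = #|g'| -> g = g'.
  move=> g g' Hg Hg' Hc; apply/eqP; rewrite eqEcard Hcs //= ?Hc //.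
have [g0 Hg0] := span_nonempty Hs.
pose b := [arg min_(g < g0 | g \in S) #|g|].
have [Hb Hbmin] : b \in S /\ forall g, g \in S -> (#|b| <= #|g|)%N.
  rewrite /b; case: arg_minnP => // x Hx Hmin; by split.
pose m := fun i : 'I_L => [arg min_(g < odflt set0 [pick g | (g \in S) && (i \in g)] | (g \in S) && (i \in g)) #|g|].
have Hm : forall i, [/\ m i \in S, i \in m i & forall g, g \in S -> i \in g -> m i \subset g].
  move=> i; rewrite /m.
  have P0 : (odflt set0 [pick g | (g \in S) && (i \in g)] \in S) && (i \in odflt set0 [pick g | (g \in S) && (i \in g)]).
    case: pickP => [x Hx //|H0] /=.
    have [g Hg Hi] := span_in i Hs. by move: (H0 g); rewrite Hg Hi.
  case: arg_minnP => // x /andP [Hx Hix] Hmin; split => // g Hg Hig.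
  by apply: Hcs => //; apply: Hmin; rewrite Hg Hig.
have minj : injective m.
  move=> i j E; apply/eqP; apply/negPn/negP => nij.
  have [g Hg Hne] := span_sep Hs nij.
  have [Hi1 Hi2 Hi3] := Hm i; have [Hj1 Hj2 Hj3] := Hm j.
  move: Hne; case: (boolP (i \in g)) => Hig; case: (boolP (j \in g)) => Hjg //= _.
  - by move: (subsetP (Hi3 g Hg Hig) j); rewrite E Hj2 (negbTE Hjg) => /(_ isT).
  - by move: (subsetP (Hj3 g Hg Hjg) i); rewrite -E Hi2 (negbTE Hig) => /(_ isT).
pose T := m @: [set: 'I_L].
have bT : b \notin T.
  apply/imsetP => [[i _ Ebi]].
  have [g Hg Hig] := span_out i Hs.
  have [_ Hi2 _] := Hm i.
  move: (subsetP (Hcs _ _ Hb Hg (Hbmin g Hg)) i); rewrite Ebi Hi2 (negbTE Hig).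
  by move=> /(_ isT).
have cT : #|b |: T| = L.+1.
  by rewrite cardsU1 bT card_imset // cardsT card_ord.
have lS : (L.+1 <= #|S|)%N.
  rewrite -cT; apply: subset_leq_card; apply/subsetP => x; rewrite !inE.
  case/orP => [/eqP ->//|/imsetP [i _ ->]]. by have [] := Hm i.
have cle : forall g : geno, (#|g| <= L)%N.
  by move=> g; move: (max_card (mem g)); rewrite card_ord.
pose psi := fun g : geno => (inord #|g| : 'I_L.+1).
have Epsi : psi @: S = setT.
  apply/eqP; rewrite eqEcard subsetT cardsT card_ord card_in_imset //.
  move=> g g' Hg Hg' E; apply: Hci => //.
  by move: (congr1 val E); rewrite /psi /= !inordK // ltnS.
have Hex : forall k, (k <= L)%N -> exists2 g, g \in S & #|g| = k.
  move=> k Hk; have : (inord k : 'I_L.+1) \in psi @: S by rewrite Epsi inE.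
  case/imsetP => g Hg E; exists g => //.
  by move: (congr1 val E); rewrite /psi /= !inordK // ltnS.
pose f := fun k => odflt set0 [pick g | (g \in S) && (#|g| == k)].
have Hf : forall k, (k <= L)%N -> f k \in S /\ #|f k| = k.
  move=> k Hk; rewrite /f; case: pickP => [x /andP [Hx /eqP Hc] //|H0] /=.
  have [g Hg Hc] := Hex k Hk. by move: (H0 g); rewrite Hg Hc eqxx.
exists f; split; [|split].
- by move=> k Hk; have [] := Hf k Hk.
- move=> k Hk; have [H1 H2] := Hf k (ltnW Hk); have [H3 H4] := Hf k.+1 Hk.
  by apply: Hcs => //; rewrite H2 H4.
- apply/setP => g; apply/idP/imsetP.
  + move=> Hg; exists (inord #|g|) => //.
    rewrite /= inordK ?ltnS //; have [H1 H2] := Hf #|g| (cle g).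
    by apply: Hci => //; rewrite H2.
  + move=> [k _ ->]; by have [] := Hf k (ltn_ord k).
Qed.

End Dir2.

Section Dir1.
Variable R : realFieldType.
Variable L : nat.
Notation geno := {set 'I_L}.
Variable w : geno -> R.
Hypothesis Hupe : universal_positive_epistasis w.
Variable f : nat -> geno.
Hypothesis Hfc : forall k, (k <= L)%N -> #|f k| = k.
Hypothesis Hfs : forall k, (k < L)%N -> f k \subset f k.+1.

Lemma fmono j k : (j <= k)%N -> (k <= L)%N -> f j \subset f k.
Proof.
move=> Hjk; elim: k Hjk => [|k IH] Hjk HkL.
  by rewrite leqn0 in Hjk; move/eqP: Hjk => ->; exact: subxx.
move: Hjk; rewrite leq_eqVlt => /orP [/eqP ->|Hjk]; first exact: subxx.
apply: subset_trans (IH Hjk (ltnW HkL)) (Hfs HkL).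
Qed.

Lemma f0 : f 0 = set0.
Proof. apply: cards0_eq; exact: Hfc. Qed.

Lemma fL : f L = setT.
Proof. apply/eqP; rewrite eqEcard subsetT cardsT card_ord Hfc ?leqnn. all: exact: erefl. Qed.

Lemma Dsing k i : (k < L)%N -> i \in f k.+1 -> i \notin f k -> f k.+1 :\: f k = [set i].
Proof.
move=> Hk Hi Hni.
have : #|f k.+1 :\: f k| == 1%N.
  by rewrite cardsD (setIidPr (Hfs Hk)) !Hfc // ?subSnn // ltnW.
case/cards1P => x Ex; rewrite Ex.
have : i \in f k.+1 :\: f k by rewrite inE Hi Hni.
by rewrite Ex => /set1P ->.
Qed.

Definition Del k := w (f k.+1) - w (f k).
Definition acoef (i : 'I_L) : R :=
  \sum_(0 <= k < L) Del k * ((i \in f k.+1)%:R - (i \in f k)%:R).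
Definition c0 := w (f 0).

Lemma affval_eq h : affval acoef c0 h =
  c0 + \sum_(0 <= k < L) Del k * (#|h :&: f k.+1|%:R - #|h :&: f k|%:R).
Proof.
rewrite /affval /acoef exchange_big /=; congr (_ + _).
apply: eq_bigr => k _; by rewrite -mulr_sumr sumrB !sum_mem_card.
Qed.

Lemma affval_chain j : (j <= L)%N -> affval acoef c0 (f j) = w (f j).
Proof.
move=> HjL; rewrite affval_eq (@big_cat_nat _ _ _ j 0 L _ _ (leq0n j) HjL) /=.
rewrite [X in _ + (_ + X)]big1_seq ?addr0; last first.
  move=> k /andP [_]; rewrite mem_index_iota => /andP [Hjk HkL].
  rewrite (setIidPl (fmono Hjk (ltnW HkL))) (setIidPl (fmono (leqW Hjk) HkL)).
  by rewrite subrr mulr0.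
rewrite (@telescope_sumr_eq _ _ _ (fun k => w (f k))) // /c0; first lra.
move=> k /andP [_ Hkj].
rewrite (setIidPr (fmono Hkj HjL)) (setIidPr (fmono (ltnW Hkj) HjL)).
rewrite !Hfc ?(leq_trans Hkj HjL) ?(leq_trans (ltnW Hkj) HjL) //.
have -> : (k.+1%:R - k%:R : R) = 1 by rewrite -natr1 addrAC subrr add0r.
by rewrite mulr1.
Qed.

Lemma step_le h k : (k < L)%N ->
  w (f k.+1 :&: h) - w (f k :&: h) <= Del k * (#|h :&: f k.+1|%:R - #|h :&: f k|%:R).
Proof.
move=> Hk.
have Sm := supermod Hupe (f k) (f k.+1 :&: h).
have E1 : f k :&: (f k.+1 :&: h) = f k :&: h.
  by rewrite setIA (setIidPl (Hfs Hk)).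
rewrite E1 in Sm.
set u := f k :|: (f k.+1 :&: h).
have CU := cardsUI (f k) (f k.+1 :&: h). rewrite -/u E1 Hfc ?(ltnW Hk) // in CU.
have s1 : f k \subset u by exact: subsetUl.
have s2 : u \subset f k.+1 by rewrite subUset Hfs // subsetIl.
have l1 := subset_leq_card s1. have l2 := subset_leq_card s2.
rewrite !Hfc ?(ltnW Hk) // in l1 l2.
rewrite (setIC h) (setIC h).
have [Eu|Eu] : #|u| = k \/ #|u| = k.+1 by lia.
- have Eu' : u = f k by apply/eqP; rewrite eq_sym eqEcard s1 Eu Hfc ?leqnn ?(ltnW Hk).
  rewrite -/u Eu' in Sm.
  have -> : #|f k.+1 :&: h| = #|f k :&: h| by lia.
  rewrite subrr mulr0; lra.
- have Eu' : u = f k.+1 by apply/eqP; rewrite eqEcard s2 Eu Hfc ?leqnn ?Hk.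
  rewrite -/u Eu' in Sm.
  have -> : #|f k.+1 :&: h| = (#|f k :&: h| + 1)%N by lia.
  rewrite natrD addrAC subrr add0r mulr1 /Del; lra.
Qed.

Lemma affval_ge h : w h <= affval acoef c0 h.
Proof.
rewrite affval_eq.
have H : \sum_(0 <= k < L) (w (f k.+1 :&: h) - w (f k :&: h)) <=
    \sum_(0 <= k < L) Del k * (#|h :&: f k.+1|%:R - #|h :&: f k|%:R).
  apply: ler_sum_nat => k /andP [_ Hk]; exact: step_le.
rewrite (@telescope_sumr _ 0 L (fun k => w (f k :&: h))) ?leq0n // fL f0 setTI set0I in H.
rewrite /c0 f0; lra.
Qed.


Definition Sst : {set geno} := [set f (val k) | k : 'I_L.+1].

Lemma memS g : g \in Sst <-> exists2 j, (j <= L)%N & g = f j.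
Proof.
split.
- case/imsetP => k _ ->; exists (val k) => //; by rewrite -ltnS ltn_ord.
- move=> [j Hj ->]; apply/imsetP; exists (inord j) => //; by rewrite /= inordK ?ltnS.
Qed.

Lemma dir1_cell : generic w -> is_cell w Sst.
Proof.
move=> Hgen.
exists acoef, c0; split; first exact: affval_ge.
move=> g; split.
  by case/memS => j Hj ->; exact: affval_chain.
move=> Eg; apply/negPn/negP => gS.
have gf : forall j, (j <= L)%N -> (g == f j) = false.
  move=> j Hj; apply/negbTE; apply: contra gS => /eqP ->; apply/memS; by exists j.
pose T := [set h | affval acoef c0 h == w h].
have HT : is_cell w T.
  exists acoef, c0; split; first exact: affval_ge.
  by move=> h; rewrite inE; split => /eqP.
have fT : forall j, (j <= L)%N -> f j \in T by move=> j Hj; rewrite inE affval_chain.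
have gT : g \in T by rewrite inE Eg.
pose t := fun k => \sum_(j in f k.+1 :\: f k) ((j \in g)%:R : R).
pose lam := fun h : geno => (h == f 0)%:R - (h == g)%:R +
   \sum_(0 <= k < L) t k * ((h == f k.+1)%:R - (h == f k)%:R).
have Hl0 : lam g = 0.
  apply: (Hgen.2 T HT lam).
  - move=> h hT.
    have hf : forall j, (j <= L)%N -> (h == f j) = false.
      move=> j Hj; apply/negbTE; apply: contra hT => /eqP ->; exact: fT.
    have hg : (h == g) = false by apply/negbTE; apply: contra hT => /eqP ->.
    rewrite /lam hf ?leq0n // hg subr0 add0r big1_seq // => k /andP [_].
    rewrite mem_index_iota => /andP [_ Hk].
    by rewrite !hf ?(ltnW Hk) // subrr mulr0.
  - rewrite /lam big_split sumrB /= !sum_ind1 fT ?leq0n // gT subrr add0r.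
    rewrite exchange_big big1_seq // => k /andP [_]; rewrite mem_index_iota => /andP [_ Hk].
    by rewrite -mulr_sumr sumrB !sum_ind1 !fT ?(ltnW Hk) // subrr mulr0.
  - move=> i; rewrite /lam big_split sumrB /= !sum_ind fT ?leq0n // gT f0 inE /= sub0r.
    rewrite exchange_big /=.
    rewrite (eq_big_nat _ _ (F2 := fun k => (i \in g)%:R * ((i \in f k.+1)%:R - (i \in f k)%:R))); last first.
      move=> k /andP [_ Hk]; rewrite -mulr_sumr sumrB !sum_ind !fT ?(ltnW Hk) //=.
      case: (boolP (i \in f k.+1)) => Hi1; case: (boolP (i \in f k)) => Hi0 /=;
        rewrite ?subrr ?mulr0 //.
      + by rewrite subr0 /t (Dsing Hk Hi1 Hi0) big_set1.
      + by move: (subsetP (Hfs Hk) i Hi0); rewrite (negbTE Hi1).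
    rewrite -mulr_sumr (@telescope_sumr _ 0 L (fun k => (i \in f k)%:R)) // fL f0 !inE /= subr0 mulr1.
    by rewrite addNr.
have Hs0 : \sum_(0 <= k < L) t k * ((g == f k.+1)%:R - (g == f k)%:R) = 0.
  apply: big1_seq => k /andP [_]; rewrite mem_index_iota => /andP [_ Hk].
  by rewrite !gf ?(ltnW Hk) // subrr mulr0.
move: Hl0; rewrite /lam Hs0 gf ?leq0n // eqxx addr0 sub0r => /eqP.
by rewrite oppr_eq0 oner_eq0.
Qed.

Lemma dir1_span : affinely_spanning R Sst.
Proof.
move=> a c H.
have Hf : forall j, (j <= L)%N -> affval a c (f j) = 0.
  by move=> j Hj; apply: H; apply/memS; exists j.
have Hc : c = 0 by move: (Hf 0%N (leq0n L)); rewrite /affval f0 big_set0 addr0.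
split => // i.
pose P := fun n => (n <= L)%N && (i \in f n).
have exP : exists n, P n by exists L; rewrite /P leqnn fL inE.
case: (ex_minnP exP) => n /andP [HnL Hin] Hmin.
case: n HnL Hin Hmin => [|k] HnL Hin Hmin; first by move: Hin; rewrite f0 inE.
have Hnk : i \notin f k.
  apply/negP => Hik; have := Hmin k; rewrite /P Hik (ltnW HnL) ltnn.
  by move=> /(_ isT).
have E0 := Hf k (ltnW HnL).
move: (Hf k.+1 HnL); rewrite /affval (big_setID (f k)) /= (setIidPr (Hfs HnL)).
rewrite (Dsing HnL Hin Hnk) big_set1.
move: E0; rewrite /affval => E0 E1; lra.
Qed.

End Dir1.

Theorem mainTheorem11 (R : realFieldType) (L : nat) (w : {set 'I_L} -> R) :
  (forall g, 0 <= w g) ->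
  generic w ->
  universal_positive_epistasis w ->
  induces_staircase w.
Proof.
move=> _ Hgen Hupe S; split.
- exact: (dir2 Hgen Hupe).
- case=> f [Hfc [Hfs ->]]; split.
  + exact: (dir1_cell Hupe Hfc Hfs Hgen).
  + exact: (dir1_span Hfc Hfs).
Qed.
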